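(* For $k=1,2,\dots$ let $f_k(x)=x+(-1)^k e^{e^k}$ and $p_k=\frac1k-\frac1{k+1}=\frac{1}{k(k+1)}$, and let $\mu$ be the probability measure on $\mathrm{Homeo}_+(\mathbb{R})$ with $\mu(\{f_k\})=p_k$. Then for every $x\in\mathbb{R}$ and every compact interval $J\subset\mathbb{R}$, almost surely $F_n(x)\in J$ for only finitely many $n$. The same conclusion holds if each $f_k$ is replaced by a map $\tilde f_k:\mathbb{R}\to\mathbb{R}$ (chosen with the same probability $p_k$) such that $\sup_{k\ge1}\sup_{x\in\mathbb{R}}|\tilde f_k(x)-f_k(x)|<\infty$.
   Context: Given the maps and probabilities, let $g_1,g_2,\dots$ be i.i.d. random maps, with $g_n$ equal to the $k$-th map with probability $p_k$, and $F_n=g_n\circ\cdots\circ g_1$. *)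

(* Defs.v *)
From HB Require Import structures.
From mathcomp Require Import all_boot all_order all_algebra.
From mathcomp Require Import all_classical all_reals all_analysis.
Set Implicit Arguments. Unset Strict Implicit. Unset Printing Implicit Defensive.
Import Order.TTheory GRing.Theory Num.Theory.
Local Open Scope classical_set_scope.
Local Open Scope ring_scope.

Definition fstep (R : realType) (k : nat) (x : R) : R :=
  x + (-1) ^+ k * expR (expR k%:R).

(* p_k = 1/(k(k+1)); note p_0 = 0 since 0^-1 = 0 in MathComp *)
Definition pk (R : realType) (k : nat) : R := (k%:R * k.+1%:R)^-1.

(* xi : nat -> T -> nat is an i.i.d. sequence with law P(xi_i = k) = p_k:
   each event [xi_i = k] is measurable and for every n and every choice
   ks, P(xi_0 = ks 0, ..., xi_{n-1} = ks (n-1)) = prod_{i<n} p_{ks i}. *)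
Definition iid_law d (T : measurableType d) (R : realType)
  (P : probability T R) (xi : nat -> T -> nat) : Prop :=
  (forall i k, measurable [set w | xi i w = k]) /\
  (forall (n : nat) (ks : nat -> nat),
     P (\bigcap_(i in [set i | (i < n)%N]) [set w | xi i w = ks i])
     = (\prod_(i < n) pk R (ks i))%:E).

(* F_n = g_n o ... o g_1, where g_{i+1} = maps (xi i); F_0 = id *)
Fixpoint Fcomp d (T : measurableType d) (R : realType)
  (maps : nat -> R -> R) (xi : nat -> T -> nat) (n : nat) (x : R) (w : T) : R :=
  match n with
  | 0 => x
  | m.+1 => maps (xi m w) (Fcomp maps xi m x w)
  end.

(* Main.v *)
Require Import Defs.
Set Warnings "-all".
From HB Require Import structures.
From mathcomp Require Import all_boot all_order all_algebra.
From mathcomp Require Import all_classical all_reals all_analysis.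
From mathcomp Require Import ring lra.
From mathcomp Require Import finmap.
Import Order.TTheory GRing.Theory Num.Theory.
Local Open Scope classical_set_scope.
Local Open Scope ring_scope.
Set Implicit Arguments. Unset Strict Implicit. Unset Printing Implicit Defensive.

Section Det.
Variable R : realType.
Definition EE (k : nat) : R := expR (expR k%:R).
Definition ss (k : nat) : R := (-1) ^+ k * EE k.

Lemma EE_ge1 k : 1 <= EE k.
Proof. by rewrite /EE -expR0 ler_expR expR_ge0. Qed.

Lemma EE_mono k l : (k <= l)%N -> EE k <= EE l.
Proof. by move=> kl; rewrite /EE !ler_expR ler_nat. Qed.

Lemma EE_sq K : EE K.+1 >= EE K ^+ 2.
Proof.
rewrite /EE expr2 -expRD ler_expR -[K.+1]addn1 natrD expRD.
have h1 : 2 <= expR (1:R) by have := expR_ge1Dx (1:R); lra.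
have h2 := expR_ge0 (K%:R : R).
nra.
Qed.

Lemma norm_ss k : `|ss k| = EE k.
Proof. by rewrite /ss normrM normr_sign mul1r ger0_norm // /EE expR_ge0. Qed.

Lemma det (k : nat -> nat) (e : nat -> R) (C L : R) (n j : nat) (i0 : 'I_n) :
  0 <= C -> 0 <= L -> (forall i, `|e i| <= C) -> (j < k i0)%N ->
  2 * L + n%:R * (1 + C) + 1 <= EE j ->
  L < `|\sum_(i < n) (ss (k i) + e i)|.
Proof.
move=> C0 L0 eC jk hE.
have n0' : (0 < #|'I_n|)%N by rewrite card_ord (leq_ltn_trans (leq0n _) (ltn_ord i0)).
have [imax Kdef] := bigop.eq_bigmax (fun i : 'I_n => k i) n0'.
set K := \max_(i < n) k i in Kdef.
have hk : forall i : 'I_n, (k i <= K)%N by move=> i; exact: leq_bigmax.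
have jK : (j < K)%N by apply: leq_trans jk (hk i0).
case: K hk jK Kdef => [//|K'] hk jK Kdef.
rewrite big_split /=.
rewrite (bigID (fun i : 'I_n => k i == K'.+1)) /=.
set S1 := \sum_(i < n | _) _.
set S2 := \sum_(i < n | _) _.
set Se := \sum_(i < n) e i.
have hS1 : EE K'.+1 <= `|S1|.
  have -> : S1 = (-1) ^+ K'.+1 * \sum_(i < n | k i == K'.+1) EE K'.+1.
    rewrite mulr_sumr; apply: eq_bigr => i2 /eqP ->; done.
  rewrite normrM normr_sign mul1r ger0_norm; last by apply: sumr_ge0 => i _; by rewrite /EE expR_ge0.
  rewrite (bigD1 imax) /=; last by rewrite -Kdef.
  rewrite lerDl; apply: sumr_ge0 => i _; by rewrite /EE expR_ge0.
have hS2 : `|S2| <= n%:R * EE K'.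
  apply: le_trans (ler_norm_sum _ _ _) _.
  apply: (@le_trans _ _ (\sum_(i < n) EE K')); last by rewrite sumr_const card_ord mulr_natl.
  rewrite big_mkcond /=; apply: ler_sum => i3 _; case: ifP => hi.
    rewrite norm_ss; apply: EE_mono.
    have := hk i3; rewrite leq_eqVlt (negbTE hi) /=; by [].
  by rewrite /EE expR_ge0.
have hSe : `|Se| <= n%:R * C.
  apply: le_trans (ler_norm_sum _ _ _) _.
  apply: (@le_trans _ _ (\sum_(i < n) C)); last by rewrite sumr_const card_ord mulr_natl.
  by apply: ler_sum => i4 _.
have hy : EE j <= EE K' by apply: EE_mono.
have hsq := EE_sq K'.
have tri : `|S1| - `|S2| - `|Se| <= `|S1 + S2 + Se|.
  have t1 := ler_normD (S1 + S2 + Se) (- (S2 + Se)).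
  rewrite normrN (_ : S1 + S2 + Se + - (S2 + Se) = S1) in t1; last by ring.
  have t2 := ler_normD S2 Se.
  lra.
have n0 : 0 <= (n%:R : R) by [].
set y := EE K' in hy hsq hS2.
have y1 : 1 <= y by apply: EE_ge1.
have h1 : 0 <= (y - 1) * (y - n%:R * (1 + C) - L) by apply: mulr_ge0; lra.
have h2 : 0 <= n%:R * C * (y - 1) by apply: mulr_ge0; [apply: mulr_ge0|lra].
have h3 : 0 <= L * (y - 1) by apply: mulr_ge0; lra.
nra.
Qed.
End Det.

Lemma in_bigsetU (T : Type) (I : eqType) (r : seq I) (F : I -> set T) w :
  (\big[setU/set0]_(i <- r) F i) w <-> exists2 i, i \in r & F i w.
Proof.
elim: r => [|i r IH]; first by rewrite big_nil; split => // -[].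
rewrite big_cons; split.
  case=> [h|/IH [j jr h]]; first by exists i => //; rewrite mem_head.
  by exists j => //; rewrite in_cons jr orbT.
case=> j; rewrite in_cons => /orP[/eqP ->|jr] h; first by left.
by right; apply/IH; exists j.
Qed.

Lemma in_bigsetU_fin (T : Type) (I : finType) (F : I -> set T) w :
  (\big[setU/set0]_(i : I) F i) w <-> exists i, F i w.
Proof.
rewrite in_bigsetU; split=> [[i _ h]|[i h]]; first by exists i.
by exists i => //; rewrite mem_index_enum.
Qed.

Lemma measure_finU d (T : measurableType d) (R : realType)
  (mu : {measure set T -> \bar R}) (I : finType) (F : I -> set T) :
  (forall i, measurable (F i)) -> trivIset setT F ->
  mu (\big[setU/set0]_(i : I) F i) = (\sum_(i : I) mu (F i))%E.
Proof.
move=> mF tF.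
have -> : \big[setU/set0]_(i : I) F i = \bigcup_(i in [set: I]) F i.
  apply/seteqP; split => w; rewrite in_bigsetU_fin.
    by case=> i h; exists i.
  by case=> i _ h; exists i.
rewrite measure_fin_bigcup //; last exact: finite_finset.
rewrite fsbig_finite; last exact: finite_finset.
apply: perm_big; apply: uniq_perm; first exact: fset_uniq.
  exact: index_enum_uniq.
move=> i; rewrite mem_index_enum in_fset_set; last exact: finite_finset.
by rewrite in_setT.
Qed.

Lemma sum_pk (R : realType) M : \sum_(k < M.+1) pk R k = M%:R / M.+1%:R.
Proof.
elim: M => [|M IH]; first by rewrite big_ord1 /pk mul0r invr0 mul0r.
rewrite big_ord_recr /= IH /pk.
have h1 : (M.+1%:R : R) != 0 by rewrite pnatr_eq0.
have h2 : (M.+2%:R : R) != 0 by rewrite pnatr_eq0.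
rewrite -[M.+2]addn1 -[M.+1]addn1 !natrD.
rewrite -[M.+1]addn1 natrD in h1; rewrite -[M.+2]addn1 -[M.+1]addn1 !natrD in h2.
field; rewrite h1 h2 //.
Qed.

Section Prob.
Variables (d : measure_display) (T : measurableType d) (R : realType)
  (P : probability T R) (xi : nat -> T -> nat).
Hypothesis hxi : iid_law P xi.

Definition cyl n (ks : nat -> nat) :=
  \bigcap_(i in [set i | (i < n)%N]) [set w | xi i w = ks i].

Lemma cyl_meas n ks : measurable (cyl n ks).
Proof. apply: bigcap_measurableType => k _; exact: hxi.1. Qed.

Definition box m M (A : nat -> pred nat) :=
  \bigcap_(i in [set i | (i < m)%N]) [set w | (xi i w <= M)%N && A i (xi i w)].

Lemma box_meas m M A : measurable (box m M A).
Proof.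
apply: bigcap_measurableType => i _.
have -> : [set w | (xi i w <= M)%N && A i (xi i w)] =
  \bigcup_(k in [set k | (k <= M)%N && A i k]) [set w | xi i w = k].
  by apply/seteqP; split => w /=; [move=> h; exists (xi i w)|case=> k /= h ->].
apply: bigcup_measurable => k _; exact: hxi.1.
Qed.

Definition ksof m M (f : {ffun 'I_m -> 'I_M.+1}) (i : nat) : nat :=
  if @insub _ (fun j => (j < m)%N) 'I_m i is Some o then val (f o) else 0%N.

Lemma ksofE m M (f : {ffun 'I_m -> 'I_M.+1}) (i : 'I_m) : ksof f i = f i.
Proof. by rewrite /ksof valK. Qed.

Lemma prob_box m M A :
  P (box m M A) = (\prod_(i < m) \sum_(k < M.+1 | A i k) pk R k)%:E.
Proof.
pose G (f : {ffun 'I_m -> 'I_M.+1}) :=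
  if [forall i : 'I_m, A i (f i)] then cyl m (ksof f) else set0.
have -> : box m M A = \big[setU/set0]_(f : {ffun 'I_m -> 'I_M.+1}) G f.
  apply/seteqP; split => w.
    move=> hw; apply/in_bigsetU_fin.
    have hw' : forall i : 'I_m, (xi i w <= M)%N && A i (xi i w) by move=> i; apply: hw => /=.
    exists [ffun i : 'I_m => inord (xi i w)].
    have hv : forall i : 'I_m, val ([ffun i : 'I_m => (inord (xi i w) : 'I_M.+1)] i) = xi i w.
      by move=> i; rewrite ffunE /= inordK // ltnS; case/andP: (hw' i).
    rewrite /G; case: ifPn => [_|/forallPn [i]]; last first.
      move=> hn; exfalso; move: hn; rewrite ffunE; case/andP: (hw' i) => hi hA.
      by rewrite inordK ?ltnS // hA.
    move=> i /= im; rewrite -[i]/(val (Ordinal im)) ksofE; exact/esym/(hv (Ordinal im)).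
  case/in_bigsetU_fin => f; rewrite /G; case: ifPn => [/forallP hA|] // hc i /= im.
  have := hc i im; rewrite /= -[i]/(val (Ordinal im)) ksofE => ->.
  by rewrite -ltnS ltn_ord hA.
rewrite measure_finU; last first.
- move=> f1 f2 _ _ [w [h1 h2]]; apply/ffunP => i.
  move: h1 h2; rewrite /G; case: ifP => _ // h1; case: ifP => _ // h2.
  have := h1 i (ltn_ord i); have := h2 i (ltn_ord i); rewrite /= !ksofE => -> e.
  by apply: val_inj.
- by move=> f; rewrite /G; case: ifP => _ //; exact: cyl_meas.
pose H i k := if A i k then pk R k else 0.
have -> : \prod_(i < m) \sum_(k < M.+1 | A i k) pk R k = \prod_(i < m) \sum_(k < M.+1) H i k.
  by apply: eq_bigr => i _; rewrite big_mkcond.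
rewrite bigA_distr_bigA /= -sumEFin; apply: eq_bigr => f _.
rewrite /G; case: ifPn => [/forallP hA|/forallPn [i hi]].
  rewrite hxi.2; congr EFin; apply: eq_bigr => i _.
  by rewrite ksofE /H hA.
rewrite measure0 (bigD1 i) //= /H (negbTE hi) mul0r //.
Qed.

Lemma xi0_negligible : P.-negligible (\bigcup_i [set w | xi i w = 0%N]).
Proof.
apply: negligible_bigcup => i.
apply: (@negligibleS _ _ _ _ (\bigcup_M box i.+1 M (fun l k => (l != i) || (k == 0%N)))).
  move=> w /= h; exists (\max_(l < i.+1) xi l w) => // l /= li.
  rewrite -[l]/(val (Ordinal li)) leq_bigmax /=.
  by case: eqP => // ->; rewrite h.
apply: negligible_bigcup => M; apply/negligibleP; first exact: box_meas.
apply: (eq_trans (prob_box _ _ _)); rewrite big_ord_recr /=.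
have -> : \sum_(k < M.+1 | (i != i) || (val k == 0%N)) pk R k = 0.
  by apply: big1 => k; rewrite eqxx /= => /eqP ->; rewrite /pk mul0r invr0.
by rewrite mulr0.
Qed.

End Prob.

Lemma bernoulli (R : realFieldType) (t : R) n : 0 <= t -> 1 + n%:R * t <= (1 + t) ^+ n.
Proof.
move=> t0; elim: n => [|n IH]; first by rewrite mul0r addr0 expr0.
rewrite exprS -[n.+1]addn1 natrD.
have h : 1 <= (1 + t) ^+ n by rewrite exprn_ege1 // lerDl.
nra.
Qed.

Lemma pow_bound (R : realFieldType) (j : nat) :
  ((j%:R / j.+1%:R : R) ^+ (j * j.+1)) <= 2 / (2 ^ j.+1)%:R.
Proof.
case: j => [|j]; first by rewrite mul0n expr0 expn1; lra.
set q : R := j.+1%:R / j.+2%:R.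
have hj : (0 : R) < j.+1%:R by rewrite ltr0n.
have hq0 : 0 <= q by rewrite /q divr_ge0 // ler0n.
have hqb : q ^+ j.+2 <= 2^-1.
  have hj' : (0:R) < (j.+1%:R)^-1 by rewrite invr_gt0.
  have hb := bernoulli j.+2 (ltW hj').
  have e : q * (1 + (j.+1%:R)^-1) = 1.
    have ea : (j.+2%:R : R) = j.+1%:R + 1 by rewrite -[j.+2]addn1 natrD.
    rewrite /q ea; field; apply/andP; split; rewrite ?(gt_eqF hj) //; apply/lt0r_neq0; lra.
  have e2 : q ^+ j.+2 * (1 + (j.+1%:R)^-1) ^+ j.+2 = 1 by rewrite -exprMn e expr1n.
  have h2 : (j.+2%:R : R) * (j.+1%:R)^-1 >= 1.
    by rewrite ler_pdivlMr // mul1r ler_nat.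
  have hqp : 0 <= q ^+ j.+2 by rewrite exprn_ge0.
  move: hb e2 h2 hqp; set Q := q ^+ j.+2; set B := (1 + _) ^+ j.+2; set c := _ * _.
  move=> hb e2 h2 hqp.
  have hB : 2 <= B by lra.
  have : Q * 2 <= 1 by nra.
  lra.
rewrite mulnC exprM.
apply: (le_trans (y := (2^-1) ^+ j.+1)).
  apply: lerXn2r => //; rewrite ?nnegrE ?exprn_ge0 //; lra.
rewrite natrX exprVn -[X in _ <= X / _]expr1 -[j.+2]addn1 exprD expr1.
rewrite invfM mulrCA mulfV ?mulr1 //; lra.
Qed.

Section Geo.
Local Open Scope ereal_scope.
Lemma geo_fin (R : realType) (f : (\bar R)^nat) :
  (forall j, 0 <= f j) -> (forall j, f j <= ((2:R) / (2 ^ j.+1)%:R)%:E) ->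
  \sum_(j <oo) f j < +oo.
Proof.
move=> f0 fb.
apply: (@le_lt_trans _ _ (\sum_(j <oo) ((2:R) / (2 ^ j.+1)%:R)%:E)).
  by apply: lee_nneseries => i _ //.
have h := @cvg_geometric_eseries_half R 2 0.
have -> : \sum_(j <oo) ((2:R) / (2 ^ j.+1)%:R)%:E = ((2:R) / 2 ^+ 0)%:E.
  apply: cvg_lim => //.
  suff -> : (fun n => \sum_(0 <= k < n) ((2:R) / (2 ^ k.+1)%:R)%:E) =
     eseries (fun k => ((2:R) / (2 ^ (k + 1))%:R)%:E) by exact: h.
  by apply/funext => n; rewrite /eseries /=; apply: eq_bigr => k _; rewrite addn1.
by rewrite ltry.
Qed.
End Geo.

Lemma growth (R : realType) (L C : R) : 0 <= L -> 0 <= C ->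
  exists J0 : nat, forall j : nat, (J0 <= j)%N ->
    2 * L + ((j.+1 * j.+2)%N%:R) * (1 + C) + 1 <= EE R j.
Proof.
move=> L0 C0.
set D : R := 12 * L + 12 * (1 + C) + 6.
have D0 : 0 <= D by rewrite /D; lra.
exists (Num.Def.archi_bound D) => j hj.
have hu : D < j.+1%:R.
  apply: lt_le_trans (archi_boundP D0) _; rewrite ler_nat; exact: leq_trans hj _.
set u : R := j.+1%:R in hu.
have e1 : 1 + (j%:R : R) <= expR j%:R by apply: expR_ge1Dx.
have e2 : 1 + expR (j%:R : R) ^+ 3 / (3`!)%:R <= EE R j.
  by apply: expR_ge1Dxn; exact: expR_ge0.
have eu : u = 1 + j%:R by rewrite /u -addn1 natrD addrC.
have e3 : (3`!)%:R = (6 : R) by [].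
rewrite e3 in e2.
have hy : u <= expR (j%:R : R) by lra.
have u0 : 0 <= u by lra.
have hy3 : u ^+ 3 <= expR (j%:R : R) ^+ 3 by apply: lerXn2r => //; rewrite nnegrE; lra.
have hn : ((j.+1 * j.+2)%N%:R : R) = u * (u + 1) by rewrite natrM /u -[j.+2]addn1 natrD.
rewrite hn.
have j0 : (0:R) <= j%:R by [].
have u1 : 1 <= u by lra.
have h4 : D * u ^+ 2 <= u ^+ 3 by rewrite [u ^+ 3]exprS; apply: ler_wpM2r => //; [exact: exprn_ge0|lra].
have h5 : 1 <= u ^+ 2 by rewrite expr2; exact: mulr_ege1.
have h6 : u * (u + 1) <= 2 * u ^+ 2.
  have : u <= u * u by rewrite -[X in X <= _]mulr1 ler_wpM2l.
  rewrite expr2 mulrDr mulr1; lra.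
have h7 : u * (u + 1) * (1 + C) <= 2 * u ^+ 2 * (1 + C) by apply: ler_wpM2r => //; lra.
rewrite /D in h4.
have h8 : L <= L * u ^+ 2 by nra.
have h9 : (1 + C) <= (1 + C) * u ^+ 2 by nra.
nra.
Qed.

Lemma Fcomp_sum (R : realType) d (T : measurableType d) (ft : nat -> R -> R)
  (xi : nat -> T -> nat) x w n :
  Fcomp ft xi n x w = x + \sum_(i < n) (ss R (xi i w) +
    (ft (xi i w) (Fcomp ft xi i x w) - fstep (xi i w) (Fcomp ft xi i x w))).
Proof.
elim: n => [|n IH]; first by rewrite big_ord0 addr0.
rewrite big_ord_recr /= addrA -IH /fstep /ss /EE; ring.
Qed.

Lemma blocks n : exists j, (j * j.+1 <= n < j.+1 * j.+2)%N.
Proof.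
elim: n => [|n [j /andP [h1 h2]]]; first by exists 0%N.
case: (ltnP n.+1 (j.+1 * j.+2)) => h3.
  by exists j; rewrite h3 andbT; apply: leqW.
exists j.+1; apply/andP; split => //.
have : (n.+1 = j.+1 * j.+2)%N by apply/eqP; rewrite eqn_leq h3 h2.
move=> ->; by rewrite [X in (X < _)%N]mulnC ltn_mul2l /=.
Qed.

Lemma infinite_unbounded (S : set nat) : ~ finite_set S ->
  forall N, exists n, S n /\ (N <= n)%N.
Proof.
move=> hS N; apply: contrapT => hN; apply: hS.
apply: (sub_finite_set _ (finite_II N)) => n Sn /=.
rewrite ltnNge; apply/negP => hn; apply: hN; by exists n.
Qed.

Section Main.
Variables (R : realType) (d : measure_display) (T : measurableType d)
  (P : probability T R) (xi : nat -> T -> nat).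
Hypothesis hxi : iid_law P xi.

Lemma main2 (ft : nat -> R -> R) (C : R) :
  (forall (k : nat) (y : R), (1 <= k)%N -> `|ft k y - fstep k y| <= C) ->
  forall (x a b : R),
  {ae P, forall w, finite_set
        [set n : nat | (0 < n)%N /\ Fcomp ft xi n x w \in `[a, b]]}.
Proof.
move=> hC x a b.
have C0 : 0 <= C by apply: le_trans (hC 1%N 0 (leqnn _)); exact: normr_ge0.
set L := `|x| + `|a| + `|b|.
have L0 : 0 <= L by rewrite /L; have := normr_ge0 x; have := normr_ge0 a; have := normr_ge0 b; lra.
have [J0 hJ0] := growth L0 C0.
pose B j := box xi (j * j.+1) j (fun _ _ => true).
have mB : forall j, measurable (B j) by move=> j; exact: (box_meas hxi).
have PB : forall j, (P (B j) <= ((2:R) / (2 ^ j.+1)%:R)%:E)%E.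
  move=> j; rewrite /B (prob_box hxi) lee_fin prodr_const card_ord sum_pk.
  exact: pow_bound.
have hlim : P (lim_sup_set B) = 0%E.
  apply: lim_sup_set_cvg0 => //; apply: geo_fin => //.
set Z := \bigcup_i [set w | xi i w = 0%N].
have nZ : P.-negligible Z by exact: xi0_negligible.
apply: (@negligibleS _ _ _ _ (lim_sup_set B `|` Z)); last first.
  apply: negligibleU => //; apply/negligibleP => //.
  apply: bigcap_measurableType => k _; exact: bigcup_measurable.
move=> w /= hw.
case: (pselect (Z w)) => [hz|hz]; [by right|left].
have xi1 : forall i, (1 <= xi i w)%N.
  move=> i; rewrite lt0n; apply/negP => /eqP h; apply: hz; by exists i.
move=> n0 _.
have [n [[n_pos hn] hbig]] := infinite_unbounded hw ((maxn n0 J0) * (maxn n0 J0).+1).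
have [j /andP [hj1 hj2]] := blocks n.
have hjJ : (maxn n0 J0 <= j)%N.
  rewrite leqNgt; apply/negP => hlt.
  have : ((j.+1 * j.+2) <= maxn n0 J0 * (maxn n0 J0).+1)%N by apply: leq_mul.
  move=> h.
  by have := leq_trans hj2 (leq_trans h hbig); rewrite ltnn.
exists j; first by rewrite /= (leq_trans (leq_maxl _ _) hjJ).
move=> i /= hi; rewrite andbT.
rewrite leqNgt; apply/negP => hgt.
have hin : (i < n)%N by apply: leq_trans hi hj1.
have hE : 2 * L + n%:R * (1 + C) + 1 <= EE R j.
  apply: le_trans (hJ0 j (leq_trans (leq_maxr _ _) hjJ)).
  have : (n%:R : R) <= (j.+1 * j.+2)%N%:R by rewrite ler_nat ltnW.
  move=> h; have : n%:R * (1 + C) <= (j.+1 * j.+2)%N%:R * (1 + C) by apply: ler_wpM2r => //; lra.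
  lra.
have := det (k := fun i => xi i w)
  (e := fun i => ft (xi i w) (Fcomp ft xi i x w) - fstep (xi i w) (Fcomp ft xi i x w))
  (i0 := Ordinal hin) C0 L0 (fun i => hC _ _ (xi1 i)) hgt hE.
move: hn; rewrite in_itv /= => /andP [ha hb].
have := Fcomp_sum ft xi x w n.
set F := Fcomp ft xi n x w; set S := \sum_(i < n) _ => hF hL.
rewrite -/F in ha hb.
have hS : S = F - x by rewrite hF; ring.
rewrite hS in hL.
have h1 := ler_normD F (- x); rewrite normrN in h1.
have h2 : `|F| <= `|a| + `|b|.
  rewrite ler_norml; have := ler_norm b; have := ler_norm (- a); rewrite normrN.
  have := normr_ge0 a; have := normr_ge0 b.
  move=> *; apply/andP; split; lra.
rewrite /L in hL; lra.
Qed.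

End Main.

Theorem mainTheorem11 (R : realType) (d : measure_display) (T : measurableType d)
  (P : probability T R) (xi : nat -> T -> nat) :
  iid_law P xi ->
  (forall (x a b : R),
     {ae P, forall w, finite_set
        [set n : nat | (0 < n)%N /\ Fcomp (@fstep R) xi n x w \in `[a, b]]})
  /\
  (forall (ft : nat -> R -> R),
     (exists C : R, forall (k : nat) (y : R), (1 <= k)%N ->
        `|ft k y - fstep k y| <= C) ->
     forall (x a b : R),
     {ae P, forall w, finite_set
        [set n : nat | (0 < n)%N /\ Fcomp ft xi n x w \in `[a, b]]}).
Proof.
move=> hxi; split.
  apply: (@main2 R d T P xi hxi (@fstep R) 0) => k y _; by rewrite subrr normr0.
by move=> ft [C hC]; exact: (@main2 R d T P xi hxi ft C hC).
Qed.
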